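(* For every even $n$ and integers $1\le k\le\frac n2$, $1\le i\le\frac n2$, $$\sum_{j=0}^{k}\binom{(n-2i)/2}{j}_{q^2}q^{2(k-j)^2-(k-j)+(n-1)j-1}\frac{(q^{n+2-4k+2j};q^2)_{2k-2j}}{(q;q)_{2k-2j}} =q^{2k^2-k-1}\sum_{r=0}^{2k}\binom{n-2i}{r}_q\,q^{(2k-r)(n-2i-r)}\frac{\prod_{j=i+r+1-2k}^{i}(1-q^{2j})}{\prod_{j=1}^{2k-r}(1-q^j)}$$ as an identity of rational functions in $q$.
   Context: $(x;t)_m=\prod_{j=0}^{m-1}(1-xt^j)$ and $\binom{c}{d}_t=\prod_{j=0}^{d-1}\frac{1-t^{c-j}}{1-t^{j+1}}$ (equal to $0$ if $d>c\ge0$). Products over empty ranges equal $1$. *)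

(* Defs.v *)
From mathcomp Require Import all_boot all_order all_algebra.
From mathcomp Require Import fraction.
Set Implicit Arguments. Unset Strict Implicit. Unset Printing Implicit Defensive.
Import Order.TTheory GRing.Theory Num.Theory.
Local Open Scope ring_scope.

Definition qpoch (F : fieldType) (x t : F) (m : nat) : F :=
  \prod_(j < m) (1 - x * t ^+ j).

(* Gaussian binomial: prod_{j=0}^{d-1} (1 - t^{c-j}) / (1 - t^{j+1});
   the factor j = c vanishes, so this is 0 when d > c >= 0. *)
Definition qbinom (F : fieldType) (t : F) (c d : nat) : F :=
  \prod_(j < d) ((1 - t ^ (c%:Z - j%:Z)) / (1 - t ^+ j.+1)).

Definition qX : {fraction {poly rat}} := FracField.tofrac ('X : {poly rat}).

(* Main.v *)
Require Import Defs.
From mathcomp Require Import all_boot all_order all_algebra.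
From mathcomp Require Import fraction.
From mathcomp Require Import zify.
From mathcomp.algebra_tactics Require Import ring.
Import Order.TTheory GRing.Theory Num.Theory.
Set Implicit Arguments. Unset Strict Implicit.
Local Open Scope ring_scope.

Definition qnum (F : fieldType) (t : F) (c d : nat) := \prod_(j < d) (1 - t ^ (c%:Z - j%:Z)).
Definition qden (F : fieldType) (t : F) (d : nat) := \prod_(j < d) (1 - t ^+ j.+1).

Lemma qbinomE (F : fieldType) (t : F) c d : qbinom t c d = qnum t c d / qden t d.
Proof. by rewrite /qbinom prodf_div. Qed.

Lemma qbinom0 (F : fieldType) (t : F) c : qbinom t c 0 = 1.
Proof. by rewrite /qbinom big_ord0. Qed.

Lemma qbinom_gt (F : fieldType) (t : F) c d : (c < d)%N -> qbinom t c d = 0.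
Proof.
move=> h; rewrite /qbinom (bigD1 (Ordinal h)) //= subrr expr0z subrr mul0r.
by rewrite mul0r.
Qed.

Lemma qnumSS (F : fieldType) (t : F) c d :
  qnum t c.+1 d.+1 = (1 - t ^ (c.+1 : int)) * qnum t c d.
Proof.
rewrite /qnum big_ord_recl /= subr0; congr (_ * _).
apply: eq_bigr => j _; congr (1 - t ^ _); rewrite /bump /=; lia.
Qed.

Lemma qnumS (F : fieldType) (t : F) c d :
  qnum t c d.+1 = qnum t c d * (1 - t ^ (c%:Z - d%:Z)).
Proof. by rewrite /qnum big_ord_recr. Qed.

Lemma qdenS (F : fieldType) (t : F) d :
  qden t d.+1 = qden t d * (1 - t ^+ d.+1).
Proof. by rewrite /qden big_ord_recr. Qed.

Lemma qden_neq0 (F : fieldType) (t : F) d :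
  (forall m, (0 < m)%N -> 1 - t ^+ m != 0) -> qden t d != 0.
Proof.
move=> ht; rewrite /qden; apply/prodf_neq0 => j _; exact: ht.
Qed.

Lemma qbinom_pascal (F : fieldType) (t : F) c d :
  t != 0 -> (forall m, (0 < m)%N -> 1 - t ^+ m != 0) ->
  qbinom t c.+1 d.+1 = t ^+ d.+1 * qbinom t c d.+1 + qbinom t c d.
Proof.
move=> t0 ht; rewrite !qbinomE qnumSS qnumS qdenS.
have e : t ^ (c.+1 : int) = t ^+ d.+1 * t ^ (c%:Z - d%:Z).
  by rewrite exprnP -expfzDr //; congr (_ ^ _); lia.
rewrite e.
have h1 := qden_neq0 d ht. have h2 := ht d.+1 isT.
field.
by rewrite h1 h2.
Qed.

Definition Tn (F : fieldType) (q x : F) (M : int) : F :=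
  match M with
  | Posz m => qpoch (x * q ^ (2 * (1 - m%:Z))) (q ^+ 2) m / qpoch q q m
  | Negz _ => 0
  end.

Definition Ssum (F : fieldType) (q x : F) (A : nat) (N : int) : F :=
  \sum_(r < A.+1) qbinom q A r * q ^ ((N - r%:Z) * (A%:Z - r%:Z)) * Tn q x (N - r%:Z).

Definition Lsum (F : fieldType) (q x : F) (a : nat) (N : int) : F :=
  \sum_(j < a.+1) qbinom (q ^+ 2) a j * q ^ (2 * (j%:Z * (j%:Z + a%:Z - N)))
     * x ^+ j * Tn q (x * q ^ (2 * (a%:Z - j%:Z))) (N - 2 * j%:Z).

Lemma powq2 (F : fieldType) (q : F) (e1 e2 e3 e4 : int) :
  q != 0 -> e1 + e2 = e3 + e4 -> q ^ e1 * q ^ e2 = q ^ e3 * q ^ e4.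
Proof. by move=> q0 h; rewrite -!expfzDr // h. Qed.

Lemma powq1 (F : fieldType) (q : F) (e1 e2 e3 : int) :
  q != 0 -> e1 + e2 = e3 -> q ^ e1 * q ^ e2 = q ^ e3.
Proof. by move=> q0 h; rewrite -!expfzDr // h. Qed.

Lemma S_rec (F : fieldType) (q x : F) A N :
  q != 0 -> (forall m, (0 < m)%N -> 1 - q ^+ m != 0) ->
  Ssum q x A.+1 N = q ^ N * Ssum q x A N + Ssum q x A (N - 1).
Proof.
move=> q0 hq; rewrite /Ssum big_ord_recl qbinom0.
under eq_bigr => i _ do rewrite qbinom_pascal // mulrDl mulrDl.
rewrite big_split /= addrA; congr (_ + _); last first.
  apply: eq_bigr => i _ /=; congr (_ * _ * Tn q x _); rewrite /bump /= ?PoszD;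
    [congr (q ^ _); ring | lia].
rewrite big_ord_recr /= qbinom_gt // mulr0 !mul0r addr0.
rewrite mulr_sumr big_ord_recl qbinom0; congr (_ + _).
  rewrite !subr0 !mul1r mulrA -expfzDr //; congr (q ^ _ * _); nia.
rewrite addr0; apply: eq_bigr => i _; rewrite /= /bump /=.
set B := qbinom q A i.+1; set T := Tn q x _.
transitivity ((q ^+ i.+1 * q ^ ((N - (1 + i)%:Z) * ((A.+1)%:Z - (1 + i)%:Z))) * B * T).
  by ring.
rewrite exprnP (@powq2 _ q _ _ N ((N - (1 + i)%N%:Z) * (A%:Z - (1 + i)%N%:Z))) //.
  by rewrite /T; ring.
rewrite !PoszD; ring.
Qed.

Lemma S_rec2 (F : fieldType) (q x : F) A N :
  q != 0 -> (forall m, (0 < m)%N -> 1 - q ^+ m != 0) ->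
  Ssum q x A.+2 N = q ^ (2 * N) * Ssum q x A N
     + (1 + q) * q ^ (N - 1) * Ssum q x A (N - 1) + Ssum q x A (N - 2).
Proof.
move=> q0 hq; rewrite S_rec // S_rec // S_rec //.
have e1 : q ^ (2 * N) = q ^ N * q ^ N by rewrite -expfzDr //; congr (_ ^ _); ring.
have e2 : q ^ N = q * q ^ (N - 1).
  by rewrite -[q in q * _]expr1z -expfzDr //; congr (_ ^ _); ring.
have e3 : N - 1 - 1 = N - 2 by ring.
rewrite e1 e3 e2; ring.
Qed.

Lemma qpoch0 (F : fieldType) (x t : F) : qpoch x t 0 = 1.
Proof. by rewrite /qpoch big_ord0. Qed.

Lemma qpochS (F : fieldType) (x t : F) m :
  qpoch x t m.+1 = (1 - x) * qpoch (x * t) t m.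
Proof.
rewrite /qpoch big_ord_recl expr0 mulr1; congr (_ * _).
by apply: eq_bigr => j _; rewrite /= exprS mulrA.
Qed.

Lemma qpochSr (F : fieldType) (x t : F) m :
  qpoch x t m.+1 = qpoch x t m * (1 - x * t ^+ m).
Proof. by rewrite /qpoch big_ord_recr. Qed.

Lemma qpochqq_neq0 (F : fieldType) (q : F) m :
  (forall m, (0 < m)%N -> 1 - q ^+ m != 0) -> qpoch q q m != 0.
Proof.
move=> hq; rewrite /qpoch; apply/prodf_neq0 => j _; rewrite -exprS; exact: hq.
Qed.

Lemma Tn_neg (F : fieldType) (q y : F) (M : int) : M < 0 -> Tn q y M = 0.
Proof. by case: M. Qed.

Lemma T_base (F : fieldType) (q y : F) (M : int) :
  q != 0 -> (forall m, (0 < m)%N -> 1 - q ^+ m != 0) ->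
  q ^ (2 * M) * Tn q y M + (1 + q) * q ^ (M - 1) * Tn q y (M - 1) + Tn q y (M - 2)
  = Tn q (y * q ^+ 2) M + q ^ (2 * (2 - M)) * y * Tn q y (M - 2).
Proof.
move=> q0 hq.
case: M => [m|m]; last first.
  by rewrite !Tn_neg ?mulr0 ?addr0 //; lia.
case: m => [|[|p]].
- rewrite (Tn_neg _ _ (_ : Posz 0 - 1 < 0)) // (Tn_neg _ _ (_ : Posz 0 - 2 < 0)) //.
  by rewrite !mulr0 !addr0 expr0z mul1r /= !qpoch0.
- rewrite (Tn_neg _ _ (_ : Posz 1 - 2 < 0)) //.
  have -> : (Posz 1) - 1 = Posz 0 by lia.
  have h1 : 1 - q != 0 by have := hq 1%N isT; rewrite expr1.
  rewrite !mulr0 !addr0 /= !qpochS !qpoch0.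
  rewrite subrr mulr0 expr0z mulr1 -(exprnP q 2).
  by field; rewrite h1 oner_neq0.
have -> : (Posz p.+2) - 1 = Posz p.+1 by lia.
have -> : (Posz p.+2) - 2 = Posz p by lia.
rewrite /Tn.
set P := q ^+ p.
have P0 : P != 0 by rewrite expf_neq0.
have E0 : q ^ (2 * (1 - p%:Z)) = q ^+ 2 / P ^+ 2.
  apply: (mulIf (expf_neq0 2 P0)); rewrite divfK ?expf_neq0 //.
  by rewrite /P -exprM exprnP exprnP -expfzDr //; congr (_ ^ _); rewrite PoszM; ring.
have E1 : q ^ (2 * (1 - (p.+1)%:Z)) = q ^+ 2 / P ^+ 2 / q ^+ 2.
  by rewrite -E0; apply: (mulIf (expf_neq0 2 q0)); rewrite divfK ?expf_neq0 //
      exprnP -expfzDr //; congr (_ ^ _); ring.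
have E2 : q ^ (2 * (1 - (p.+2)%:Z)) = q ^+ 2 / P ^+ 2 / q ^+ 4.
  by rewrite -E0; apply: (mulIf (expf_neq0 4 q0)); rewrite divfK ?expf_neq0 //
      exprnP -expfzDr //; congr (_ ^ _); ring.
have E3 : q ^ (2 * (p.+2)%:Z) = P ^+ 2 * q ^+ 4.
  by rewrite /P -exprM !exprnP -expfzDr //; congr (_ ^ _); rewrite PoszM; ring.
have E4 : q ^ ((p.+1)%:Z) = P * q.
  by rewrite /P -exprSr exprnP; congr (_ ^ _); lia.
have E5 : q ^ (2 * (2 - (p.+2)%:Z)) = 1 / P ^+ 2.
  apply: (mulIf (expf_neq0 2 P0)); rewrite divfK ?expf_neq0 // /P -exprM exprnP
      -expfzDr //; rewrite -(expr0z q); congr (_ ^ _); rewrite PoszM; ring.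
rewrite E2 E1 E0 E3 E4.
set C := qpoch (y * (q ^+ 2 / P ^+ 2)) (q ^+ 2) p.
have QP : (q ^+ 2) ^+ p = P ^+ 2 by rewrite /P -!exprM mulnC.
have hA : qpoch (y * (q ^+ 2 / P ^+ 2 / q ^+ 4)) (q ^+ 2) p.+2 =
   (1 - y * (q ^+ 2 / P ^+ 2 / q ^+ 4)) * (1 - y * (q ^+ 2 / P ^+ 2 / q ^+ 2)) * C.
  rewrite !qpochS mulrA /C; congr (_ * (1 - _) * qpoch _ _ _); field; by rewrite P0 q0.
have hB : qpoch (y * (q ^+ 2 / P ^+ 2 / q ^+ 2)) (q ^+ 2) p.+1 =
   (1 - y * (q ^+ 2 / P ^+ 2 / q ^+ 2)) * C.
  rewrite !qpochS /C; congr (_ * qpoch _ _ _); field; by rewrite P0 q0.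
have hC : qpoch (y * q ^+ 2 * (q ^+ 2 / P ^+ 2 / q ^+ 4)) (q ^+ 2) p.+2 =
   (1 - y * (q ^+ 2 / P ^+ 2 / q ^+ 2)) * C * (1 - y * q ^+ 2).
  rewrite qpochSr qpochS (exprS (q ^+ 2) p) QP /C; congr ((1 - _) * qpoch _ _ _ * (1 - _));
    field; by rewrite P0 q0.
set D := qpoch q q p.
have hD : qpoch q q p.+2 = D * (1 - q * P) * (1 - q * (q * P)).
  by rewrite !qpochSr exprS.
have hE : qpoch q q p.+1 = D * (1 - q * P) by rewrite qpochSr.
rewrite hA hB hC hD hE.
have D0 : D != 0 by exact: qpochqq_neq0.
have h1 : 1 - q * P != 0 by rewrite /P -exprS; exact: hq.
have h2 : 1 - q * (q * P) != 0 by rewrite /P -!exprS; exact: hq.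
field.
by rewrite D0 h1 h2 P0 q0.
Qed.

Lemma hq2 (F : fieldType) (q : F) :
  (forall m, (0 < m)%N -> 1 - q ^+ m != 0) ->
  (forall m, (0 < m)%N -> 1 - (q ^+ 2) ^+ m != 0).
Proof. by move=> hq m hm; rewrite -exprM; apply: hq; rewrite muln_gt0. Qed.

Lemma mulrD3 (F : fieldType) (a b c d e : F) :
  (a + b) * c * d * e = a * c * d * e + b * c * d * e.
Proof. by rewrite !mulrDl. Qed.

Lemma LS (F : fieldType) (q x : F) a N :
  q != 0 -> (forall m, (0 < m)%N -> 1 - q ^+ m != 0) ->
  Lsum q x a N = Ssum q x (2 * a) N.
Proof.
move=> q0 hq; elim: a N => [|a IH] N.
  rewrite /Lsum /Ssum !big_ord_recl !big_ord0 !addr0 !qbinom0 /=.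
  by rewrite !(mul0r, mulr0) expr0z !mulr1 !mul1r.
have -> : (2 * a.+1 = (2 * a).+2)%N by lia.
rewrite S_rec2 // -!IH.
have t0 : q ^+ 2 != 0 by rewrite expf_neq0.
have ht := hq2 hq.
rewrite {2 3 4}/Lsum !mulr_sumr -!big_split /=.
set M := fun j : nat => N - 2 * j%:Z.
set y := fun j : nat => x * q ^ (2 * (a%:Z - j%:Z)).
set E := fun j : nat => 2 * (j%:Z * (j%:Z + a%:Z - N + 2)).
transitivity (\sum_(j < a.+1) qbinom (q ^+ 2) a j * q ^ (E j) * x ^+ j *
   (q ^ (2 * M j) * Tn q (y j) (M j) + (1 + q) * q ^ (M j - 1) * Tn q (y j) (M j - 1)
    + Tn q (y j) (M j - 2))); last first.
  apply: eq_bigr => j _.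
  have -> : N - 1 - 2 * j%:Z = M j - 1 by rewrite /M; ring.
  have -> : N - 2 - 2 * j%:Z = M j - 2 by rewrite /M; ring.
  have h0 : q ^ (2 * N) * q ^ (2 * (j%:Z * (j%:Z + a%:Z - N))) = q ^ (E j) * q ^ (2 * M j).
    by apply: powq2 => //; rewrite /E /M; ring.
  have h1 : q ^ (N - 1) * q ^ (2 * (j%:Z * (j%:Z + a%:Z - (N - 1)))) = q ^ (E j) * q ^ (M j - 1).
    by apply: powq2 => //; rewrite /E /M; ring.
  have h2 : q ^ (2 * (j%:Z * (j%:Z + a%:Z - (N - 2)))) = q ^ (E j).
    by congr (_ ^ _); rewrite /E; ring.
  rewrite -/(M j) -/(y j) h2.
  set C := qbinom _ _ _; set T0 := Tn q _ (M j); set T1 := Tn q _ (M j - 1); set T2 := Tn q _ (M j - 2).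
  transitivity (C * x ^+ j * ((q ^ (2 * N) * q ^ (2 * (j%:Z * (j%:Z + a%:Z - N)))) * T0
     + (1 + q) * (q ^ (N - 1) * q ^ (2 * (j%:Z * (j%:Z + a%:Z - (N - 1))))) * T1
     + q ^ (E j) * T2)); last by ring.
  by rewrite h0 h1; ring.
under eq_bigr => j _ do rewrite T_base // mulrDr.
rewrite big_split /=.
rewrite /Lsum big_ord_recl qbinom0.
under [in LHS]eq_bigr => i _ do rewrite /= /bump leq0n add1n qbinom_pascal // mulrD3.
rewrite big_split /= addrA; congr (_ + _); last first.
  apply: eq_bigr => i _; rewrite /y /M /E.
  have -> : x * q ^ (2 * ((a.+1)%:Z - (i.+1)%:Z)) = x * q ^ (2 * (a%:Z - i%:Z)).
    by congr (_ * (_ ^ _)); rewrite !intS; ring.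
  have -> : N - 2 * (i.+1)%:Z = N - 2 * i%:Z - 2 by rewrite !intS; ring.
  set C := qbinom _ _ _; set T := Tn _ _ _.
  rewrite exprS.
  transitivity (C * x ^+ i * x * T * q ^ (2 * ((i.+1)%:Z * ((i.+1)%:Z + (a.+1)%:Z - N)))).
    by ring.
  have hp : q ^ (2 * ((i.+1)%:Z * ((i.+1)%:Z + (a.+1)%:Z - N))) =
     q ^ (2 * (i%:Z * (i%:Z + a%:Z - N + 2))) * (q ^ (2 * (2 - (N - 2 * i%:Z))) * q ^ (2 * (a%:Z - i%:Z))).
    by rewrite -!expfzDr //; congr (_ ^ _); rewrite !intS; ring.
  rewrite hp.
  ring.
rewrite [in LHS]big_ord_recr /= qbinom_gt // mulr0 !mul0r addr0.
rewrite [in RHS]big_ord_recl qbinom0 /y /M /E; congr (_ + _).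
  rewrite !(mul0r, mulr0, subr0, expr0z, expr0, mul1r, mulr1).
  congr (Tn q _ _); rewrite -mulrA; congr (_ * _).
  by rewrite exprnP -expfzDr //; congr (_ ^ _); rewrite intS; ring.
rewrite mulr0 !mul0r addr0.
apply: eq_bigr => i _; rewrite /= /bump leq0n add1n.
have -> : x * q ^ (2 * ((a.+1)%:Z - (i.+1)%:Z)) = x * q ^ (2 * (a%:Z - (i.+1)%:Z)) * q ^+ 2.
  by rewrite -mulrA exprnP -expfzDr //; congr (_ * (_ ^ _)); rewrite !intS; ring.
have hp : (q ^+ 2) ^+ i.+1 * q ^ (2 * ((i.+1)%:Z * ((i.+1)%:Z + (a.+1)%:Z - N))) =
     q ^ (2 * ((i.+1)%:Z * ((i.+1)%:Z + a%:Z - N + 2))).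
  by rewrite -exprM exprnP -expfzDr //; congr (_ ^ _); rewrite PoszM !intS; ring.
rewrite -hp; ring.
Qed.

Lemma sum_ext (F : fieldType) (f : nat -> F) m1 m2 :
  (forall j, (minn m1 m2 <= j)%N -> f j = 0) ->
  \sum_(j < m1) f j = \sum_(j < m2) f j.
Proof.
wlog h : m1 m2 / (m1 <= m2)%N.
  move=> W hf; case: (leqP m1 m2) => h; first exact: W.
  by symmetry; apply: W; [exact: ltnW | move=> j hj; apply: hf; rewrite minnC].
move=> hf; rewrite -!(big_mkord xpredT) (big_cat_nat (leq0n m1) h) /=.
rewrite [X in _ + X]big1_seq ?addr0 // => j /andP[_]; rewrite mem_index_iota => /andP[hj _].
by apply: hf; rewrite geq_min hj.
Qed.

Lemma qX_neq0 : qX != 0.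
Proof. by rewrite /qX tofrac_eq0 polyX_eq0. Qed.

Lemma qX_hq m : (0 < m)%N -> 1 - qX ^+ m != 0.
Proof.
move=> hm; rewrite /qX -tofracXn -tofrac1 -tofracB tofrac_eq0.
apply/eqP => /(congr1 (fun p : {poly rat} => p.[0])).
rewrite hornerD hornerN hornerXn hornerC expr0n eqn0Ngt hm /= subr0 horner0.
by move/eqP; rewrite oner_eq0.
Qed.

Theorem mainTheorem11 (n k i : nat) :
  ~~ odd n -> (1 <= k)%N -> (k <= n./2)%N -> (1 <= i)%N -> (i <= n./2)%N ->
  \sum_(0 <= j < k.+1)
     qbinom (qX ^+ 2) (n./2 - i) j
     * qX ^ (2 * (k%:Z - j%:Z) ^+ 2 - (k%:Z - j%:Z) + (n%:Z - 1) * j%:Z - 1)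
     * (qpoch (qX ^ (n%:Z + 2 - 4 * k%:Z + 2 * j%:Z)) (qX ^+ 2) (2 * k - 2 * j)
        / qpoch qX qX (2 * k - 2 * j))
  =
  qX ^ (2 * k%:Z ^+ 2 - k%:Z - 1)
  * \sum_(0 <= r < (2 * k).+1)
      qbinom qX (n - 2 * i) r
      * qX ^ ((2 * k%:Z - r%:Z) * (n%:Z - 2 * i%:Z - r%:Z))
      * ((\prod_(0 <= m < 2 * k - r)
            (1 - qX ^ (2 * (i%:Z + r%:Z + 1 - 2 * k%:Z + m%:Z))))
         / \prod_(1 <= m < (2 * k - r).+1) (1 - qX ^+ m)).
Proof.
move=> hodd hk1 hkn hi1 hin.
have q0 := qX_neq0.
have hq := qX_hq.
have hn : n = (2 * n./2)%N.
  by have := odd_double_half n; rewrite (negbTE hodd) add0n -mul2n.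
move: hkn hin; set h := n./2 => hkn hin.
set a := (h - i)%N.
have hA : (n - 2 * i = 2 * a)%N by rewrite /a; lia.
have hnZ : n%:Z = 2 * a%:Z + 2 * i%:Z by rewrite /a; lia.
rewrite hA.
set x := qX ^ (2 * i%:Z).
set N := 2 * k%:Z.
set c := 2 * k%:Z ^+ 2 - k%:Z - 1.
have HL : \sum_(0 <= j < k.+1)
     qbinom (qX ^+ 2) a j
     * qX ^ (2 * (k%:Z - j%:Z) ^+ 2 - (k%:Z - j%:Z) + (n%:Z - 1) * j%:Z - 1)
     * (qpoch (qX ^ (n%:Z + 2 - 4 * k%:Z + 2 * j%:Z)) (qX ^+ 2) (2 * k - 2 * j)
        / qpoch qX qX (2 * k - 2 * j)) = qX ^ c * Lsum qX x a N.
  rewrite /Lsum big_mkord mulr_sumr.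
  transitivity (\sum_(j < k.+1) qX ^ c * (qbinom (qX ^+ 2) a j * qX ^ (2 * (j%:Z * (j%:Z + a%:Z - N)))
     * x ^+ j * Tn qX (x * qX ^ (2 * (a%:Z - j%:Z))) (N - 2 * j%:Z))); last first.
    rewrite -!mulr_sumr; congr (_ * _).
    apply: (@sum_ext _ (fun j : nat => qbinom (qX ^+ 2) a j * qX ^ (2 * (j%:Z * (j%:Z + a%:Z - N)))
     * x ^+ j * Tn qX (x * qX ^ (2 * (a%:Z - j%:Z))) (N - 2 * j%:Z))) => j hj.
    case: (leqP j a) => hja; last by rewrite qbinom_gt // !mul0r.
    rewrite Tn_neg ?mulr0 //; rewrite /N; lia.
  apply: eq_bigr => [[j hj]] _ /=.
  have hjk : (j <= k)%N by [].
  have -> : N - 2 * j%:Z = Posz (2 * k - 2 * j)%N by rewrite /N; lia.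
  rewrite /Tn.
  have -> : x * qX ^ (2 * (a%:Z - j%:Z)) * qX ^ (2 * (1 - (2 * k - 2 * j)%N%:Z)) =
            qX ^ (n%:Z + 2 - 4 * k%:Z + 2 * j%:Z).
    rewrite /x -!expfzDr //; congr (_ ^ _); rewrite hnZ.
    have -> : ((2 * k - 2 * j)%N : int) = 2 * k%:Z - 2 * j%:Z by lia.
    ring.
  have -> : x ^+ j = qX ^ (2 * i%:Z * j%:Z) by rewrite /x exprnP exprz_exp.
  set B := qbinom _ _ _; set P := qpoch _ _ _ / _.
  have -> : qX ^ (2 * (k%:Z - j%:Z) ^+ 2 - (k%:Z - j%:Z) + (n%:Z - 1) * j%:Z - 1) =
     qX ^ c * (qX ^ (2 * (j%:Z * (j%:Z + a%:Z - N))) * qX ^ (2 * i%:Z * j%:Z)).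
    rewrite -!expfzDr //; congr (_ ^ _); rewrite hnZ /c /N; ring.
  ring.
have HR : \sum_(0 <= r < (2 * k).+1)
      qbinom qX (2 * a) r
      * qX ^ ((2 * k%:Z - r%:Z) * (n%:Z - 2 * i%:Z - r%:Z))
      * ((\prod_(0 <= m < 2 * k - r)
            (1 - qX ^ (2 * (i%:Z + r%:Z + 1 - 2 * k%:Z + m%:Z))))
         / \prod_(1 <= m < (2 * k - r).+1) (1 - qX ^+ m)) = Ssum qX x (2 * a) N.
  rewrite /Ssum big_mkord.
  transitivity (\sum_(r < (2 * k).+1) (qbinom qX (2 * a) r * qX ^ ((N - r%:Z) * ((2 * a)%N%:Z - r%:Z))
     * Tn qX x (N - r%:Z))); last first.
    apply: (@sum_ext _ (fun r : nat => qbinom qX (2 * a) r * qX ^ ((N - r%:Z) * ((2 * a)%N%:Z - r%:Z))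
     * Tn qX x (N - r%:Z))) => r hr.
    case: (leqP r (2 * a)) => hra; last by rewrite qbinom_gt // !mul0r.
    rewrite Tn_neg ?mulr0 //; rewrite /N; lia.
  apply: eq_bigr => [[r hr]] _ /=.
  have hrk : (r <= 2 * k)%N by [].
  have -> : N - r%:Z = Posz (2 * k - r)%N by rewrite /N; lia.
  rewrite /Tn.
  have -> : (n%:Z - 2 * i%:Z - r%:Z) = ((2 * a)%N%:Z - r%:Z) by lia.
  congr (_ * _ * (_ / _)).
    rewrite /qpoch big_mkord; apply: eq_bigr => m _; congr (1 - _).
    rewrite /x -exprM !exprnP -!expfzDr //; congr (_ ^ _).
    have -> : ((2 * k - r)%N : int) = 2 * k%:Z - r%:Z by lia.
    rewrite PoszM; ring.
  rewrite big_add1 /= /qpoch big_mkord; apply: eq_bigr => m _.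
  by rewrite exprS.
rewrite HL HR LS //.
Qed.
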